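(* Let $G$ be a group acting on a set $X$, and let $\alpha\in\,]0,1]$. (1) Let $A\subset G$ and $Y\subset X$ be nonempty, with $Y$ finite, such that $|A^{-1}\cdot Y|\leq\frac{3-\alpha}{2}|Y|$. Then $(AA^{-1})^{2}\subset\mathrm{Sym}_{\alpha}(Y)$ and $AA^{-1}\subset\mathrm{Sym}_{\alpha}(Y)$. (2) Let $(\rho,V)$ be a linear representation of $G$ on a finite-dimensional vector space $V$ over a field $k$. Let $A\subset G$ be nonempty and $W$ a nonzero finite-dimensional $k$-subspace of $V$ with $\dim\langle A^{-1}\cdot W\rangle\leq\frac{3-\alpha}{2}\dim W$. Then $(AA^{-1})^{2}\subset\mathrm{Sym}_{\alpha}(W)$.
   Context: For $A\subset G$, $A^{-1}=\{a^{-1}\mid a\in A\}$, $AA^{-1}=\{ab^{-1}\mid a,b\in A\}$ and $(AA^{-1})^2=\{uv\mid u,v\in AA^{-1}\}$. $A\cdot Y=\{a\cdot y\mid a\in A,y\in Y\}$; $\langle A\cdot W\rangle$ is the $k$-span of $\{a\cdot w\mid a\in A,w\in W\}$. For finite nonempty $Y\subset X$, $\mathrm{Sym}_{\alpha}(Y)=\{g\in G\mid |g\cdot Y\cap Y|\geq\alpha|Y|\}$; for a nonzero subspace $W$, $\mathrm{Sym}_{\alpha}(W)=\{g\in G\mid \dim(g\cdot W\cap W)\geq\alpha\dim W\}$. *)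

(* Defs.v *)
From HB Require Import structures.
From mathcomp Require Import all_boot all_algebra.
From Stdlib Require Import Reals List.
Set Implicit Arguments. Unset Strict Implicit. Unset Printing Implicit Defensive.

Definition is_group (G : Type) (mul : G -> G -> G) (inv : G -> G) (one : G) : Prop :=
  (forall a b c, mul a (mul b c) = mul (mul a b) c) /\
  (forall a, mul one a = a) /\ (forall a, mul a one = a) /\
  (forall a, mul (inv a) a = one) /\ (forall a, mul a (inv a) = one).

Definition is_action (G X : Type) (mul : G -> G -> G) (one : G) (act : G -> X -> X) : Prop :=
  (forall x, act one x = x) /\ (forall g h x, act (mul g h) x = act g (act h x)).

Definition set_inv (G : Type) (inv : G -> G) (A : G -> Prop) : G -> Prop :=
  fun g => exists a, A a /\ g = inv a.

Definition AAinv (G : Type) (mul : G -> G -> G) (inv : G -> G) (A : G -> Prop) : G -> Prop :=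
  fun g => exists a b, A a /\ A b /\ g = mul a (inv b).

Definition setsq (G : Type) (mul : G -> G -> G) (S : G -> Prop) : G -> Prop :=
  fun g => exists u v, S u /\ S v /\ g = mul u v.

Definition act_set (G X : Type) (act : G -> X -> X) (B : G -> Prop) (Y : X -> Prop) : X -> Prop :=
  fun y => exists b x, B b /\ Y x /\ y = act b x.

Definition card_is (T : Type) (S : T -> Prop) (n : nat) : Prop :=
  exists s : list T, NoDup s /\ length s = n /\ (forall x, S x <-> In x s).

Definition SymSet (G X : Type) (act : G -> X -> X) (alpha : R) (Y : X -> Prop) : G -> Prop :=
  fun g => exists n k, card_is Y n /\
     card_is (fun x => act_set act (fun h => h = g) Y x /\ Y x) k /\
     Rle (Rmult alpha (INR n)) (INR k).

Definition is_span_of (G : Type) (k : fieldType) (V : vectType k)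
    (rho : G -> 'End(V)) (B : G -> Prop) (W U : {vspace V}) : Prop :=
  (forall b w, B b -> w \in W -> rho b w \in U) /\
  (forall U' : {vspace V}, (forall b w, B b -> w \in W -> rho b w \in U') -> (U <= U')%VS).

Definition SymSpace (G : Type) (k : fieldType) (V : vectType k)
    (rho : G -> 'End(V)) (alpha : R) (W : {vspace V}) : G -> Prop :=
  fun g => Rle (Rmult alpha (INR (\dim W))) (INR (\dim ((rho g @: W) :&: W)%VS)).

Definition is_rep (G : Type) (mul : G -> G -> G) (one : G) (k : fieldType) (V : vectType k)
    (rho : G -> 'End(V)) : Prop :=
  rho one = \1%VF /\ (forall g h, rho (mul g h) = (rho g \o rho h)%VF).

(* Main.v *)
Require Import Defs.
From HB Require Import structures.
From mathcomp Require Import all_boot all_algebra.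
From Stdlib Require Import Reals List.
From Stdlib Require Import Lia Lra FinFun ClassicalDescription.
From mathcomp Require Import zify.

Definition dec (P : Prop) : bool := if excluded_middle_informative P then true else false.
Lemma decP (P : Prop) : dec P = true <-> P.
Proof. unfold dec; destruct (excluded_middle_informative P) as [p|p]; split; intro H;
  [exact p|reflexivity|discriminate|contradiction]. Qed.

Lemma card_unique (T : Type) (P : T -> Prop) n n' : card_is P n -> card_is P n' -> n = n'.
Proof.
intros [l [Hl [Hn Hm]]] [l' [Hl' [Hn' Hm']]]. subst.
apply Nat.le_antisymm; apply NoDup_incl_length; auto; intros x Hx;
  [apply Hm', Hm | apply Hm, Hm']; exact Hx.
Qed.

Lemma card_filter (T : Type) (P : T -> Prop) (l : list T) (f : T -> bool) :
  NoDup l -> (forall x, P x -> In x l) -> (forall x, In x l -> (f x = true <-> P x)) ->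
  card_is P (length (List.filter f l)).
Proof.
intros Hl HP Hf. exists (List.filter f l). split; [apply NoDup_filter; exact Hl|split; [reflexivity|]].
intros x; rewrite filter_In; split.
- intros Px. split; [apply HP; exact Px| apply (Hf x (HP x Px)); exact Px].
- intros [Hx Hfx]. apply (Hf x Hx); exact Hfx.
Qed.

Arguments card_filter {T P l f}.
Arguments card_unique {T P n n'}.
Lemma card_exists (T : Type) (Z P : T -> Prop) z :
  card_is Z z -> (forall x, P x -> Z x) -> exists p, card_is P p.
Proof.
intros [l [Hl [_ Hm]]] HPZ. eexists. apply (card_filter (f := fun x => dec (P x)) Hl).
- intros x Px; apply Hm, HPZ, Px.
- intros x _; apply decP.
Qed.

Arguments card_exists {T Z P z}.
Lemma card_inj (T U : Type) (P : T -> Prop) (Q : U -> Prop) (f : T -> U) k k' :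
  card_is P k -> card_is Q k' -> (forall x y, f x = f y -> x = y) ->
  (forall x, P x -> Q (f x)) -> le k k'.
Proof.
intros [l [Hl [Hn Hm]]] [l' [Hl' [Hn' Hm']]] Hinj HPQ. subst.
rewrite -(length_map f l). apply NoDup_incl_length.
- apply Injective_map_NoDup; [exact Hinj | exact Hl].
- intros y Hy. apply in_map_iff in Hy. destruct Hy as [x [Hfx Hx]]. subst y.
  apply Hm', HPQ, Hm, Hx.
Qed.

Arguments card_inj {T U P Q f k k'}.
Lemma filter_ie (T : Type) (p q : T -> bool) (l : list T) :
  (length (List.filter p l) + length (List.filter q l) =
  length (List.filter (fun x => p x && q x) l) + length (List.filter (fun x => p x || q x) l))%coq_nat.
Proof. induction l as [|a l IH]; simpl; [reflexivity|]. destruct (p a), (q a); simpl; lia. Qed.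

Lemma filter_le (T : Type) (p : T -> bool) (l : list T) : le (length (List.filter p l)) (length l).
Proof. induction l as [|a l IH]; simpl; [lia|]. destruct (p a); simpl; lia. Qed.

Lemma card_ie (T : Type) (Z P Q : T -> Prop) z p q i :
  card_is Z z -> (forall x, P x -> Z x) -> (forall x, Q x -> Z x) ->
  card_is P p -> card_is Q q -> card_is (fun x => P x /\ Q x) i -> le (p + q)%coq_nat (z + i)%coq_nat.
Proof.
intros HZ HPZ HQZ Hp Hq Hi. destruct HZ as [l [Hl [Hn Hm]]]. subst z.
assert (Ep : p = length (List.filter (fun x => dec (P x)) l)).
{ apply (card_unique Hp). apply card_filter; auto.
  intros x Px; apply Hm, HPZ, Px. intros x _; apply decP. }
assert (Eq : q = length (List.filter (fun x => dec (Q x)) l)).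
{ apply (card_unique Hq). apply card_filter; auto.
  intros x Px; apply Hm, HQZ, Px. intros x _; apply decP. }
assert (Ei : i = length (List.filter (fun x => dec (P x) && dec (Q x)) l)).
{ apply (card_unique Hi). apply card_filter; auto.
  intros x [Px _]; apply Hm, HPZ, Px. intros x _; pose proof (decP (P x)); pose proof (decP (Q x)).
  destruct (dec (P x)), (dec (Q x)); simpl; intuition congruence. }
rewrite Ep Eq Ei filter_ie. pose proof (filter_le _ (fun x => dec (P x) || dec (Q x)) l). lia.
Qed.

Arguments card_ie {T Z P Q z p q i}.
Definition Sg (G X : Type) (act : G -> X -> X) (Y : X -> Prop) (g : G) : X -> Prop :=
  fun x => act_set act (fun h => h = g) Y x /\ Y x.

Arguments Sg {G X} act Y g _.
Lemma act_inv_l G mul inv one (HG : is_group mul inv one) X (act : G -> X -> X)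
  (Hact : is_action mul one act) a x : act (inv a) (act a x) = x.
Proof. destruct HG as (_&_&_&Hl&Hr); destruct Hact as (H1&H2). rewrite -H2 Hl H1. reflexivity. Qed.
Arguments act_inv_l {G mul inv one} HG {X act} Hact a x.
Lemma act_inv_r G mul inv one (HG : is_group mul inv one) X (act : G -> X -> X)
  (Hact : is_action mul one act) a x : act a (act (inv a) x) = x.
Proof. destruct HG as (_&_&_&Hl&Hr); destruct Hact as (H1&H2). rewrite -H2 Hr H1. reflexivity. Qed.
Arguments act_inv_r {G mul inv one} HG {X act} Hact a x.
Lemma act_inj G mul inv one (HG : is_group mul inv one) X (act : G -> X -> X)
  (Hact : is_action mul one act) a x y : act a x = act a y -> x = y.
Proof. intro E. rewrite -(act_inv_l HG Hact a x) -(act_inv_l HG Hact a y) E. reflexivity. Qed.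

Arguments act_inj {G mul inv one} HG {X act} Hact a x y.
Lemma pair1 G mul inv one (HG : is_group mul inv one) X (act : G -> X -> X)
  (Hact : is_action mul one act) (A : G -> Prop) (Y : X -> Prop) nY m :
  card_is Y nY -> card_is (act_set act (set_inv inv A) Y) m ->
  forall a b, A a -> A b -> exists k, card_is (Sg act Y (mul a (inv b))) k /\
     le (nY + nY)%coq_nat (m + k)%coq_nat.
Proof.
intros HY HZ a b Ha Hb.
pose (P := fun x => exists y, Y y /\ x = act (inv a) y).
pose (Q := fun x => exists y, Y y /\ x = act (inv b) y).
assert (HPZ : forall x, P x -> act_set act (set_inv inv A) Y x).
{ intros x [y [Hy Hx]]. exists (inv a), y. split; [exists a; split; auto|split; auto]. }
assert (HQZ : forall x, Q x -> act_set act (set_inv inv A) Y x).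
{ intros x [y [Hy Hx]]. exists (inv b), y. split; [exists b; split; auto|split; auto]. }
destruct (card_exists HZ HPZ) as [p Hp].
destruct (card_exists HZ HQZ) as [q Hq].
assert (Hp1 : le nY p).
{ apply (card_inj (f := act (inv a)) HY Hp). apply (act_inj HG Hact).
  intros y Hy. exists y; split; auto. }
assert (Hq1 : le nY q).
{ apply (card_inj (f := act (inv b)) HY Hq). apply (act_inj HG Hact).
  intros y Hy. exists y; split; auto. }
destruct (card_exists (P := fun x => P x /\ Q x) HZ (fun x H => HPZ x (proj1 H))) as [i Hi].
pose proof (card_ie HZ HPZ HQZ Hp Hq Hi) as Hie.
destruct (card_exists (P := Sg act Y (mul a (inv b))) HY (fun x H => proj2 H)) as [k Hk].
exists k; split; [exact Hk|].
assert (le i k); [|lia].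
apply (card_inj (f := act a) Hi Hk). apply (act_inj HG Hact).
intros x [[y [Hy Hx]] [y' [Hy' Hx']]]. split.
- exists (mul a (inv b)), y'. split; [reflexivity|split; [exact Hy'|]].
  rewrite Hx'. destruct Hact as [_ H2]. rewrite H2. reflexivity.
- rewrite Hx (act_inv_r HG Hact). exact Hy.
Qed.

Lemma square1 G mul inv one (HG : is_group mul inv one) X (act : G -> X -> X)
  (Hact : is_action mul one act) (Y : X -> Prop) nY u v ku kv :
  card_is Y nY -> card_is (Sg act Y u) ku -> card_is (Sg act Y v) kv ->
  exists k, card_is (Sg act Y (mul u v)) k /\ le (ku + kv)%coq_nat (nY + k)%coq_nat.
Proof.
intros HY Hu Hv.
pose (Q := fun x => Y x /\ Y (act u x)).
destruct (card_exists (P := Q) HY (fun x H => proj1 H)) as [q Hq].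
assert (le ku q).
{ apply (card_inj (f := act (inv u)) Hu Hq). apply (act_inj HG Hact).
  intros y [[h [y' [Eh [Hy' Ey]]]] Hy]. subst h. split.
  - rewrite Ey (act_inv_l HG Hact). exact Hy'.
  - rewrite (act_inv_r HG Hact). exact Hy. }
destruct (card_exists (P := fun x => Sg act Y v x /\ Q x) HY (fun x H => proj2 (proj1 H))) as [i Hi].
pose proof (card_ie HY (fun x H => proj2 H) (fun x H => proj1 H) Hv Hq Hi) as Hie.
destruct (card_exists (P := Sg act Y (mul u v)) HY (fun x H => proj2 H)) as [k Hk].
exists k; split; [exact Hk|].
assert (le i k); [|lia].
apply (card_inj (f := act u) Hi Hk). apply (act_inj HG Hact).
intros x [[[h [y' [Eh [Hy' Ey]]]] Hx] [_ Hux]]. subst h. split; [|exact Hux].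
exists (mul u v), y'. split; [reflexivity|split; [exact Hy'|]].
rewrite Ey. destruct Hact as [_ H2]. rewrite H2. reflexivity.
Qed.

Lemma dim_limg_le (K : fieldType) (V : vectType K) (f : 'End(V)) (U : {vspace V}) :
  (\dim (f @: U) <= \dim U)%N.
Proof. rewrite -[X in (_ <= X)%N](limg_ker_dim f U). apply leq_addl. Qed.


Lemma dim_rho (G : Type) (mul : G -> G -> G) (inv : G -> G) (one : G)
  (HG : is_group mul inv one) (K : fieldType) (V : vectType K) (rho : G -> 'End(V))
  (Hrho : is_rep mul one rho) g (U : {vspace V}) : \dim (rho g @: U) = \dim U.
Proof.
apply/eqP; rewrite eqn_leq dim_limg_le /=.
have E : \dim U = \dim (rho (inv g) @: (rho g @: U)).
{ destruct HG as (_&_&_&Hl&_); destruct Hrho as [H1 H2].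
  by rewrite -limg_comp -H2 Hl H1 lim1g. }
rewrite {1}E; apply dim_limg_le.
Qed.

Arguments dim_rho {G mul inv one} HG {K V rho} Hrho g U.

Lemma pair2 (G : Type) (mul : G -> G -> G) (inv : G -> G) (one : G)
  (HG : is_group mul inv one) (K : fieldType) (V : vectType K) (rho : G -> 'End(V))
  (Hrho : is_rep mul one rho) (A : G -> Prop) (W U : {vspace V})
  (Hs : forall b w, set_inv inv A b -> w \in W -> rho b w \in U) a b :
  A a -> A b ->
  (\dim W + \dim W <= \dim ((rho (mul a (inv b)) @: W) :&: W) + \dim U)%N.
Proof.
move=> Ha Hb.
set P := (rho (inv a) @: W)%VS. set Q := (rho (inv b) @: W)%VS.
have PU : (P <= U)%VS.
{ apply/subvP => x /memv_imgP [w Hw ->]. apply: Hs => //. exists a; split; auto. }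
have QU : (Q <= U)%VS.
{ apply/subvP => x /memv_imgP [w Hw ->]. apply: Hs => //. exists b; split; auto. }
have dP : \dim P = \dim W by apply: (dim_rho HG Hrho).
have dQ : \dim Q = \dim W by apply: (dim_rho HG Hrho).
have Hsc := dimv_sum_cap P Q.
have HPQ : (\dim (P + Q) <= \dim U)%N by apply: dimvS; rewrite subv_add PU QU.
have Hcap : (rho a @: (P :&: Q) <= (rho (mul a (inv b)) @: W) :&: W)%VS.
{ destruct HG as (_&_&_&_&Hr); destruct Hrho as [H1 H2].
  rewrite subv_cap; apply/andP; split.
  - apply: (subv_trans (limgS _ (capvSr P Q))). by rewrite /Q -limg_comp -H2 subvv.
  - apply: (subv_trans (limgS _ (capvSl P Q))). by rewrite /P -limg_comp -H2 Hr H1 lim1g subvv. }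
have := dimvS Hcap. rewrite (dim_rho HG Hrho). lia.
Qed.

Lemma square2 (G : Type) (mul : G -> G -> G) (inv : G -> G) (one : G)
  (HG : is_group mul inv one) (K : fieldType) (V : vectType K) (rho : G -> 'End(V))
  (Hrho : is_rep mul one rho) (W : {vspace V}) u v :
  (\dim ((rho u @: W) :&: W) + \dim ((rho v @: W) :&: W) <=
   \dim W + \dim ((rho (mul u v) @: W) :&: W))%N.
Proof.
set X1 := (rho u @: ((rho v @: W) :&: W))%VS. set X2 := ((rho u @: W) :&: W)%VS.
have d1 : \dim X1 = \dim ((rho v @: W) :&: W) by apply: (dim_rho HG Hrho).
have S1 : (X1 <= rho u @: W)%VS by apply: limgS; apply: capvSr.
have S2 : (X2 <= rho u @: W)%VS by apply: capvSl.
have Hsc := dimv_sum_cap X1 X2.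
have HS : (\dim (X1 + X2) <= \dim W)%N.
{ rewrite -(dim_rho HG Hrho u W). apply: dimvS; by rewrite subv_add S1 S2. }
have Hcap : (X1 :&: X2 <= (rho (mul u v) @: W) :&: W)%VS.
{ destruct Hrho as [H1 H2].
  rewrite subv_cap; apply/andP; split.
  - apply: (subv_trans (capvSl X1 X2)). rewrite /X1 H2 limg_comp. apply: limgS; apply: capvSl.
  - apply: (subv_trans (capvSr X1 X2)). apply: capvSr. }
have := dimvS Hcap. lia.
Qed.

Arguments pair1 {G mul inv one} HG {X act} Hact {A Y nY m} HY HZ a b Ha Hb.
Arguments square1 {G mul inv one} HG {X act} Hact {Y nY u v ku kv} HY Hu Hv.
Arguments pair2 {G mul inv one} HG {K V rho} Hrho {A W U} Hs a b Ha Hb.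
Arguments square2 {G mul inv one} HG {K V rho} Hrho W u v.

Theorem mainTheorem2
  (G : Type) (mul : G -> G -> G) (inv : G -> G) (one : G)
  (HG : is_group mul inv one) (alpha : R)
  (Halpha0 : Rlt 0 alpha) (Halpha1 : Rle alpha 1) :
  (* (1) *)
  (forall (X : Type) (act : G -> X -> X), is_action mul one act ->
   forall (A : G -> Prop) (Y : X -> Prop) (nY : nat),
     (exists a, A a) -> card_is Y nY -> (0 < nY)%nat ->
     (exists m, card_is (act_set act (set_inv inv A) Y) m /\
        Rle (INR m) (Rmult (Rdiv (Rminus 3 alpha) 2) (INR nY))) ->
     (forall g, setsq mul (AAinv mul inv A) g -> SymSet act alpha Y g) /\
     (forall g, AAinv mul inv A g -> SymSet act alpha Y g)) /\
  (* (2) *)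
  (forall (k : fieldType) (V : vectType k) (rho : G -> 'End(V)), is_rep mul one rho ->
   forall (A : G -> Prop) (W : {vspace V}),
     (exists a, A a) -> W != 0%VS ->
     (exists U : {vspace V}, is_span_of rho (set_inv inv A) W U /\
        Rle (INR (\dim U)) (Rmult (Rdiv (Rminus 3 alpha) 2) (INR (\dim W)))) ->
     forall g, setsq mul (AAinv mul inv A) g -> SymSpace rho alpha W g).
Proof.
split.
- intros X act Hact A Y nY _ HY _ [m [Hm Hle]].
  assert (key1 : forall g, AAinv mul inv A g ->
     exists k, card_is (Sg act Y g) k /\ le (nY + nY)%coq_nat (m + k)%coq_nat).
  { intros g [a [b [Ha [Hb Hg]]]]. subst g. exact (pair1 HG Hact HY Hm a b Ha Hb). }
  pose proof (pos_INR nY) as HnY.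
  split.
  + intros g [u [v [Hu [Hv Hg]]]]. subst g.
    destruct (key1 u Hu) as [ku [Hku Hu']]. destruct (key1 v Hv) as [kv [Hkv Hv']].
    destruct (square1 HG Hact HY Hku Hkv) as [k [Hk Hk']].
    exists nY, k. split; [exact HY|split; [exact Hk|]].
    apply le_INR in Hu'. apply le_INR in Hv'. apply le_INR in Hk'.
    rewrite !plus_INR in Hu', Hv', Hk'.
    assert (E : ((3 - alpha) / 2 * INR nY = (3 * INR nY - alpha * INR nY) / 2)%R) by field.
    rewrite E in Hle. lra.
  + intros g Hg. destruct (key1 g Hg) as [k [Hk Hk']].
    exists nY, k. split; [exact HY|split; [exact Hk|]].
    apply le_INR in Hk'. rewrite !plus_INR in Hk'.
    assert (E : ((3 - alpha) / 2 * INR nY = (3 * INR nY - alpha * INR nY) / 2)%R) by field.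
    rewrite E in Hle.
    pose proof (Rmult_le_pos (1 - alpha)%R (INR nY) ltac:(lra) HnY). lra.
- intros k V rho Hrho A W _ _ [U [[Hs _] HD]] g [u [v [Hu [Hv Hg]]]]. subst g.
  destruct Hu as [a [b [Ha [Hb Hu]]]]. destruct Hv as [c [d [Hc [Hd Hv]]]]. subst u v.
  have H1 := pair2 HG Hrho Hs a b Ha Hb.
  have H2 := pair2 HG Hrho Hs c d Hc Hd.
  have H3 := square2 HG Hrho W (mul a (inv b)) (mul c (inv d)).
  unfold SymSpace.
  set d0 := \dim W. set D := \dim U.
  set k1 := \dim ((rho (mul a (inv b)) @: W) :&: W)%VS.
  set k2 := \dim ((rho (mul c (inv d)) @: W) :&: W)%VS.
  set k3 := \dim ((rho (mul (mul a (inv b)) (mul c (inv d))) @: W) :&: W)%VS.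
  assert (L1 : le (d0 + d0)%coq_nat (k1 + D)%coq_nat) by lia.
  assert (L2 : le (d0 + d0)%coq_nat (k2 + D)%coq_nat) by lia.
  assert (L3 : le (k1 + k2)%coq_nat (d0 + k3)%coq_nat) by lia.
  apply le_INR in L1, L2, L3. rewrite !plus_INR in L1, L2, L3.
  pose proof (pos_INR d0).
  assert (E : ((3 - alpha) / 2 * INR d0 = (3 * INR d0 - alpha * INR d0) / 2)%R) by field.
  rewrite E in HD. change (INR (\dim U)) with (INR D) in HD. lra.
Qed.
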